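(* For integers $a\ge 1$ and $n\ge 2$, the modified fan graph $\overline{Fan}_n$ satisfies $$t(\overline{Fan}_n)=a\,B_{n-1}(a).$$ In particular, for $a=1$, $t(Fan_n)=F_{2n}$, where $F_k$ is the $k$-th Fibonacci number.
   Context: $t(H)$ is the number of spanning trees of $H$. The modified fan graph $\overline{Fan}_n$ is obtained from the path graph $P_n$ with vertices $p_1,\dots,p_n$ by adding a new vertex $p$ and joining $p$ to each vertex $p_j$ of $P_n$ by $a\ge 1$ parallel edges; for $a=1$ it is the fan graph $Fan_n$. The Morgan–Voyce polynomials are defined by $B_0(x)=1$, $B_1(x)=x+2$, $B_n(x)=(x+2)B_{n-1}(x)-B_{n-2}(x)$ for $n\ge2$. Fibonacci numbers: $F_1=F_2=1$, $F_k=F_{k-1}+F_{k-2}$. *)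

(* Defs.v *)
From mathcomp Require Import all_boot all_order all_algebra.
Set Implicit Arguments. Unset Strict Implicit. Unset Printing Implicit Defensive.
Import GRing.Theory Num.Theory.

Section SpanningTrees.
Variables (V E : finType) (ends : E -> V * V).

Definition sub_adj (T : {set E}) : rel V :=
  fun x y => [exists e in T, (ends e == (x, y)) || (ends e == (y, x))].

Definition sub_connected (T : {set E}) : bool :=
  [forall x, [forall y, connect (sub_adj T) x y]].

(* (V, T) has no cycle: no edge of T has its endpoints joined in T minus it
   (this also excludes loops). *)
Definition sub_acyclic (T : {set E}) : bool :=
  [forall e in T, ~~ connect (sub_adj (T :\ e)) (ends e).1 (ends e).2].

Definition is_spanning_tree (T : {set E}) : bool :=
  sub_connected T && sub_acyclic T.

(* t(H): number of spanning trees (as edge sets; parallel edges distinct) *)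
Definition num_spanning_trees : nat := #|[set T : {set E} | is_spanning_tree T]|.
End SpanningTrees.

(* Modified fan graph: vertices 'I_n.+1, with 0 = p and i = p_i (1 <= i <= n).
   Edges: inl j (j < n-1) is the path edge p_{j+1} p_{j+2};
          inr (j, k) (j < n, k < a) is the k-th parallel edge p p_{j+1}. *)
Definition fan_E (a n : nat) : finType := ('I_n.-1 + 'I_n * 'I_a)%type.

Definition fan_ends (a n : nat) (e : fan_E a n) : 'I_n.+1 * 'I_n.+1 :=
  match e with
  | inl j => (inord j.+1, inord j.+2)
  | inr jk => (ord0, inord jk.1.+1)
  end.

Definition t_modfan (a n : nat) : nat := num_spanning_trees (@fan_ends a n).

(* Morgan-Voyce polynomials B_n evaluated at x *)
Fixpoint MV (n : nat) (x : int) : int :=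
  match n with
  | 0 => 1
  | 1 => x + 2
  | (m.+1 as k).+1 => (x + 2) * MV k x - MV m x
  end%R.

Fixpoint fib (n : nat) : nat :=
  match n with
  | 0 => 0
  | 1 => 1
  | (m.+1 as k).+1 => fib k + fib m
  end.

(* Main.v *)
Require Import Defs.
From mathcomp Require Import all_boot all_order all_algebra.
From mathcomp Require Import zify.
Set Implicit Arguments. Unset Strict Implicit. Unset Printing Implicit Defensive.

Section Graph.
Variables (V E : finType) (ends : E -> V * V).
Implicit Types (S : {set E}) (e f : E) (x y : V).
Local Notation adj := (sub_adj ends).
Local Notation acyc := (sub_acyclic ends).

Lemma adj_sym S : symmetric (adj S).
Proof.
move=> x y; apply/existsP/existsP => -[e /andP[eS H]]; exists e; by rewrite eS /= orbC.
Qed.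

Lemma conn_sym S x y : connect (adj S) x y = connect (adj S) y x.
Proof. exact: (sym_connect_sym (adj_sym S)). Qed.

Lemma conn_ind (r : rel V) (P : V -> Prop) x y :
  P x -> (forall z w, P z -> r z w -> P w) -> connect r x y -> P y.
Proof.
move=> Px Hc /connectP [p pth ->]; elim: p x Px pth => [|z p IH] x Px //= /andP[rxz pth].
exact: IH (Hc _ _ Px rxz) pth.
Qed.

Lemma edge_conn S e : e \in S -> connect (adj S) (ends e).1 (ends e).2.
Proof.
move=> eS; apply: connect1; apply/existsP; exists e; rewrite eS /=.
by case: (ends e) => ? ? /=; rewrite eqxx.
Qed.

Lemma conn_mono S S' x y : S \subset S' -> connect (adj S) x y -> connect (adj S') x y.
Proof.
move=> sub; apply: connect_sub => u v /existsP[e /andP[eS H]].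
apply: connect1; apply/existsP; exists e; by rewrite (subsetP sub _ eS) H.
Qed.

Lemma conn_closed S (A : pred V) x y :
  (forall e, e \in S -> A (ends e).1 = A (ends e).2) -> connect (adj S) x y -> A x = A y.
Proof.
move=> H; apply: (conn_ind (P := fun z => A x = A z)) => // z w ->
  /existsP[e /andP[eS /orP[]/eqP He]]; have := H e eS; rewrite He //=.
Qed.

Lemma conn_add S e x y : connect (adj (e |: S)) x y ->
  connect (adj S) x y \/
  ((connect (adj S) x (ends e).1 \/ connect (adj S) x (ends e).2) /\
   (connect (adj S) (ends e).1 y \/ connect (adj S) (ends e).2 y)).
Proof.
move=> C; apply: (@conn_ind _ (fun y => connect (adj S) x y \/
  ((connect (adj S) x (ends e).1 \/ connect (adj S) x (ends e).2) /\
   (connect (adj S) (ends e).1 y \/ connect (adj S) (ends e).2 y))) x y _ _ C)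
  => [|z w Pz /existsP[f /andP[]]]; first by left.
rewrite in_setU1 => /orP[/eqP-> | fS] Hf.
- right; split.
  + case: Pz => [xz|[]//]; move: Hf; case: (ends e) => u v /= /orP[]/eqP[-> ->]; by [left|right].
  + move: Hf; case: (ends e) => u v /= /orP[]/eqP[-> ->]; by [left|right].
- have azw : adj S z w by apply/existsP; exists f; rewrite fS Hf.
  case: Pz => [xz|[H1 H2]]; first by left; exact: connect_trans xz (connect1 azw).
  right; split => //; case: H2 => H2; [left|right]; exact: connect_trans H2 (connect1 azw).
Qed.

Lemma acyc_add S e : e \notin S -> ~~ connect (adj S) (ends e).1 (ends e).2 ->
  acyc S -> acyc (e |: S).
Proof.
move=> eS nc /forall_inP acS; apply/forall_inP => f; rewrite in_setU1 => /orP[/eqP->|fS].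
  by rewrite setU1K.
have fe : f != e by apply: contraNneq eS => <-.
have -> : (e |: S) :\ f = e |: (S :\ f).
  apply/setP => g; rewrite !inE; case: (eqVneq g e) => [->|//]; by rewrite eq_sym fe.
apply/negP => /conn_add [H|[H1 H2]]; first by move: (acS f fS); rewrite H.
have nf := acS f fS.
have Sf : connect (adj S) (ends f).1 (ends f).2 := edge_conn fS.
have mono x y := @conn_mono (S :\ f) S x y (subD1set S f).
case: H1 H2 => H1 [] H2.
- by move: nf; rewrite (connect_trans H1 H2).
- apply: (negP nc); rewrite conn_sym in H1; rewrite conn_sym in H2.
  exact: connect_trans (mono _ _ H1) (connect_trans Sf (mono _ _ H2)).
- apply: (negP nc); rewrite conn_sym in Sf.
  exact: connect_trans (mono _ _ H2) (connect_trans Sf (mono _ _ H1)).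
- by move: nf; rewrite (connect_trans H1 H2).
Qed.

Lemma cyc_add S e : e \notin S -> connect (adj S) (ends e).1 (ends e).2 -> ~~ acyc (e |: S).
Proof. move=> eS c; apply/forall_inP => /(_ e (setU11 e S)); by rewrite setU1K // c. Qed.

Lemma acyc_mono S S' : S \subset S' -> ~~ acyc S -> ~~ acyc S'.
Proof.
move=> sub /forall_inPn [e eS /negPn c]; apply/forall_inPn; exists e.
  exact: subsetP sub _ eS.
apply/negPn; apply: conn_mono c; exact: setSD.
Qed.

End Graph.

Lemma sum_subsetU (T : finType) (A B : {set T}) (f : {set T} -> {set T} -> nat) :
  [disjoint A & B] ->
  \sum_(X : {set T} | X \subset A :|: B) f (X :&: A) (X :&: B) =
  \sum_(X : {set T} | X \subset A) \sum_(Y : {set T} | Y \subset B) f X Y.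
Proof.
move=> dAB; rewrite pair_big_dep /=.
rewrite (reindex_onto (fun p : {set T} * {set T} => p.1 :|: p.2) (fun X => (X :&: A, X :&: B))) /=.
  apply: eq_big => [[X Y]|[X Y]] /=.
    apply/idP/idP => [/andP[_ /eqP [hA hB]]|/andP[sXA sYB]].
      by rewrite -hA -hB !subsetIr.
    have YA : Y :&: A = set0.
      by apply: disjoint_setI0; apply: disjointWl sYB _; rewrite disjoint_sym.
    have XB : X :&: B = set0.
      by apply: disjoint_setI0; apply: disjointWl sXA _.
    rewrite setUSS //= !setIUl YA XB setU0 set0U.
    by rewrite (setIidPl sXA) (setIidPl sYB).
  by move=> /andP[_ /eqP [-> ->]].
by move=> X sX; rewrite -setIUr; apply/setIidPl.
Qed.

Lemma sum_sub0 (T : finType) (h : {set T} -> nat) : \sum_(Y : {set T} | Y \subset set0) h Y = h set0.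
Proof. by rewrite (eq_bigl (fun Y => Y == set0)) ?big_pred1_eq // => Y; rewrite subset0. Qed.

Lemma set1_n0 (T : finType) (x : T) : [set x] != set0.
Proof. by apply/set0Pn; exists x; exact: set11. Qed.

Lemma sum_sub1 (T : finType) (x : T) (h : {set T} -> nat) :
  \sum_(Y : {set T} | Y \subset [set x]) h Y = h set0 + h [set x].
Proof.
rewrite (bigD1 set0) ?sub0set //=; congr addn.
rewrite (eq_bigl (fun Y => Y == [set x])) ?big_pred1_eq // => Y.
rewrite subset1; case: (eqVneq Y set0) => [->|]; rewrite ?orbF ?andbT ?andbF //.
by rewrite eq_sym (negbTE (set1_n0 x)).
Qed.

Lemma sum_draws (T : finType) (F : {set T}) k :
  \sum_(Y : {set T} | Y \subset F) (#|Y| == k : nat) = 'C(#|F|, k).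
Proof.
rewrite -cards_draws -sum1_card big_mkcond [RHS]big_mkcond /=; apply: eq_bigr => Y _.
by rewrite !inE; case: (Y \subset F); case: (#|Y| == k).
Qed.

Lemma sum_card01 (T : finType) (F : {set T}) (q : nat -> nat) :
  (forall k, 1 < k -> q k = 0) -> \sum_(Y : {set T} | Y \subset F) q #|Y| = q 0 + q 1 * #|F|.
Proof.
move=> hq; transitivity (\sum_(Y : {set T} | Y \subset F) (q 0 * (#|Y| == 0) + q 1 * (#|Y| == 1))).
  apply: eq_bigr => Y _; case: #|Y| => [|[|k]]; rewrite /= ?muln0 ?muln1 ?addn0 ?add0n //.
  by rewrite hq.
rewrite big_split /= -!big_distrr /= !sum_draws bin0 bin1 muln1 //.
Qed.

Section Fan.
Variables (a n : nat).
Local Notation E := (fan_E a n).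
Local Notation V := ('I_n.+1).
Local Notation ends := (@fan_ends a n).
Local Notation adj := (sub_adj ends).
Local Notation conn S := (connect (adj S)).
Local Notation acyc := (sub_acyclic ends).
Implicit Types (T S : {set E}) (e f : E).

Definition lvl (e : E) : nat := match e with inl j => j.+2 | inr jk => jk.1.+1 end.
Definition isfan (e : E) : bool := if e is inr _ then true else false.

Lemma ends2 e : nat_of_ord (ends e).2 = lvl e.
Proof. case: e => [j|[j k]] /=; rewrite inordK //; have := ltn_ord j; lia. Qed.
Lemma ends1 e : nat_of_ord (ends e).1 = if isfan e then 0 else (lvl e).-1.
Proof. case: e => [j|[j k]] //=; rewrite inordK //; have := ltn_ord j; lia. Qed.
Lemma lvl_le e : lvl e <= n.
Proof. case: e => [j|[j k]] /=; have := ltn_ord j; lia. Qed.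
Lemma lvl_path e : ~~ isfan e -> 1 < lvl e.
Proof. by case: e. Qed.
Lemma lvl_gt0 e : 0 < lvl e.
Proof. by case: e. Qed.
Lemma ends1_lt e : nat_of_ord (ends e).1 < lvl e.
Proof. rewrite ends1; case: (isfan e); have := lvl_gt0 e; lia. Qed.
Lemma path_uniq e f : ~~ isfan e -> ~~ isfan f -> lvl e = lvl f -> e = f.
Proof. case: e => [j|//]; case: f => [j'|//] _ _ [] H; congr inl; exact: val_inj. Qed.
Lemma fan_ends_eq e f : isfan e -> isfan f -> lvl e = lvl f -> ends e = ends f.
Proof. case: e => [//|[j k]]; case: f => [//|[j' k']] _ _ /= [->]. done. Qed.

Definition Tl T m := [set e in T | lvl e <= m].
Definition Dp m T := [set e in T | ~~ isfan e && (lvl e == m)].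
Definition Df m T := [set e in T | isfan e && (lvl e == m)].
Definition bpath m T := Dp m T != set0.
Definition cfan m T := #|Df m T|.

Definition step (s : nat) (b : bool) (c : nat) : nat :=
  if s == 0 then (if b then (if c <= 1 then c else 2) else 2)
  else if s == 1 then (if b then (if c == 0 then 1 else 2) else (if c <= 1 then c else 2))
  else 2.

Fixpoint st m T : nat :=
  if m is k.+1 then step (st k T) (bpath k.+1 T) (cfan k.+1 T) else 1.

Lemma step_big s b c : 1 < c -> step s b c = 2.
Proof. by rewrite /step; case: s => [|[|s]]; case: b; case: c => [|[|c]]. Qed.

Lemma Tl_S T m : Tl T m.+1 = Df m.+1 T :|: (Dp m.+1 T :|: Tl T m).
Proof.
apply/setP => e; rewrite !inE leq_eqVlt ltnS.
by case: (e \in T); case: (isfan e); case: (lvl e == m.+1); case: (lvl e <= m).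
Qed.

Lemma Tl_lt T m e : e \in Tl T m -> nat_of_ord (ends e).1 < m /\ nat_of_ord (ends e).2 <= m.
Proof. rewrite inE => /andP[_ H]; have := ends1_lt e; rewrite ends2; lia. Qed.

Lemma notin_Tl T m e : lvl e = m.+1 -> e \notin Tl T m.
Proof. by rewrite inE => ->; rewrite ltnn andbF. Qed.

Lemma iso T m x y : conn (Tl T m) x y -> nat_of_ord y = m.+1 -> nat_of_ord x = m.+1.
Proof.
move=> C hy; have := @conn_closed _ _ ends _ (fun z : V => nat_of_ord z == m.+1) _ _ _ C.
rewrite hy eqxx => /(_ _)/eqP; apply => e /Tl_lt [h1 h2].
have -> : (nat_of_ord (ends e).1 == m.+1) = false.
  by apply/negbTE/eqP => H; move: h1; rewrite H ltnNge leqnSn.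
by apply/esym/negbTE/eqP => H; move: h2; rewrite H ltnn.
Qed.

Lemma Dp1 T k : bpath k T -> exists p, [/\ Dp k T = [set p], p \in T, ~~ isfan p & lvl p = k].
Proof.
case/set0Pn => p; rewrite inE => /and3P[pT pf /eqP pl]; exists p; split=> //.
apply/setP => e; rewrite !inE; apply/idP/idP => [/and3P[eT ef /eqP el]| /eqP->].
  by apply/eqP; apply: path_uniq => //; rewrite el pl.
by rewrite pT pf pl eqxx.
Qed.

Lemma Dp0 T k : ~~ bpath k T -> Dp k T = set0.
Proof. by move/negbNE/eqP. Qed.

Lemma Df1 T k : cfan k T = 1 -> exists f, [/\ Df k T = [set f], f \in T, isfan f & lvl f = k].
Proof.
move/eqP/cards1P => [f Hf]; exists f; split => //; have : f \in Df k T by rewrite Hf set11.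
  by rewrite inE => /and3P[].
  by rewrite inE => /and3P[].
by rewrite inE => /and3P[_ _ /eqP].
Qed.

Definition spanning T := is_spanning_tree ends T.

Lemma two_fans T k : 1 < cfan k T -> ~~ spanning T.
Proof.
case/card_gt1P => f1 [f2 []]; rewrite !inE => /and3P[f1T ff1 /eqP l1] /and3P[f2T ff2 /eqP l2] ne.
have c : ~~ acyc (f2 |: [set f1]).
  apply: cyc_add; first by rewrite in_set1 eq_sym.
  rewrite (fan_ends_eq ff2 ff1); last by rewrite l1 l2.
  exact: edge_conn (set11 f1).
apply/negP => /andP[_ ac]; have sub : f2 |: [set f1] \subset T.
  by apply/subsetP => e; rewrite !inE => /orP[]/eqP->.
by have := acyc_mono sub c; rewrite ac.
Qed.


Definition Inv T m : Prop :=
  match st m T with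
  | 0 => acyc (Tl T m) /\ exists l, [/\ 0 < l <= m,
      (forall x : V, x < l -> conn (Tl T m) ord0 x),
      (forall x y : V, l <= x <= m -> l <= y <= m -> conn (Tl T m) x y) &
      (forall e, e \in Tl T m -> (l <= (ends e).1 <= m) = (l <= (ends e).2 <= m))]
  | 1 => acyc (Tl T m) /\ (forall x : V, x <= m -> conn (Tl T m) ord0 x)
  | _ => ~~ spanning T
  end.

Lemma inv0 T : Inv T 0.
Proof.
rewrite /Inv /=; have -> : Tl T 0 = set0.
  by apply/setP => e; rewrite !inE leqn0 (gtn_eqF (lvl_gt0 e)) andbF.
split; first by apply/forall_inP => e; rewrite inE.
move=> x; rewrite leqn0 => /eqP x0; have -> : x = ord0 by apply: ord_inj.
exact: connect0.
Qed.


Lemma acyc_addp T m p : p \notin Tl T m -> nat_of_ord (ends p).1 != m.+1 ->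
  nat_of_ord (ends p).2 = m.+1 -> acyc (Tl T m) -> acyc (p |: Tl T m).
Proof.
move=> pTl p1 p2 ac; apply: acyc_add => //; apply/negP => /iso /(_ p2) H.
by rewrite H eqxx in p1.
Qed.

Lemma L_nob T m l : m < n -> ~~ bpath m.+1 T -> 0 < l <= m ->
  (forall e, e \in Tl T m -> (l <= (ends e).1 <= m) = (l <= (ends e).2 <= m)) ->
  ~~ spanning T.
Proof.
move=> mn nb /andP[l0 lm] cl; apply/negP => /andP[/forallP/(_ ord0)/forallP/(_ (inord l)) C _].
have P : forall e, e \in T -> (fun z : V => l <= z <= m) (ends e).1 = (fun z : V => l <= z <= m) (ends e).2.
  move=> e eT /=; case: (leqP (lvl e) m) => hle.
    by apply: cl; rewrite inE eT hle.
  rewrite ends2 (leqNgt (lvl e) m) hle andbF ends1.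
  case ef: (isfan e); first by rewrite leqNgt l0.
  case: (eqVneq (lvl e) m.+1) => el.
    have : e \in Dp m.+1 T by rewrite inE eT ef el eqxx.
    by rewrite (Dp0 nb) inE.
  have : m < (lvl e).-1 by lia.
  by move=> h; rewrite (leqNgt _ m) h andbF.
have := @conn_closed _ _ ends T (fun z : V => l <= z <= m) _ _ P C; rewrite /= inordK; last by lia.
by rewrite leqNgt l0 leqnn lm.
Qed.

Lemma S0_facts T m l p : p \notin Tl T m -> nat_of_ord (ends p).1 = m ->
  nat_of_ord (ends p).2 = m.+1 -> acyc (Tl T m) -> 0 < l <= m ->
  (forall x y : V, l <= x <= m -> l <= y <= m -> conn (Tl T m) x y) ->
  (forall e, e \in Tl T m -> (l <= (ends e).1 <= m) = (l <= (ends e).2 <= m)) ->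
  [/\ acyc (p |: Tl T m),
      (forall z : V, l <= z <= m.+1 -> conn (p |: Tl T m) z (ends p).2) &
      (forall e, e \in p |: Tl T m -> (l <= (ends e).1 <= m.+1) = (l <= (ends e).2 <= m.+1))].
Proof.
move=> pTl p1 p2 acT /andP[l0 lm] cI cl; split.
- by apply: acyc_addp => //; rewrite p1; apply/eqP; lia.
- move=> z /andP[lz zm]; case: (eqVneq (nat_of_ord z) m.+1) => [zE|zE].
    have -> : z = (ends p).2 by apply: ord_inj; rewrite p2 zE.
    exact: connect0.
  apply: (@connect_trans _ _ (ends p).1); last exact: edge_conn (setU11 p _).
  apply: conn_mono (subsetUr _ _) _; apply: cI; rewrite ?p1; lia.
- move=> e; rewrite in_setU1 => /orP[/eqP-> | eT]; first by rewrite p1 p2; lia.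
  have [h1 h2] := Tl_lt eT; have := cl e eT.
  have -> : (nat_of_ord (ends e).1 <= m.+1) = (nat_of_ord (ends e).1 <= m) by lia.
  have -> : (nat_of_ord (ends e).2 <= m.+1) = (nat_of_ord (ends e).2 <= m) by lia.
  done.
Qed.

Lemma invS T m : m < n -> Inv T m -> Inv T m.+1.
Proof.
move=> mn; rewrite /Inv [st m.+1 T]/= Tl_S.
case: (ltnP 1 (cfan m.+1 T)) => Hc.
  by rewrite step_big //= => _; exact: two_fans Hc.
have [Df0|[f [Dff fT ff fl]]] : Df m.+1 T = set0 \/
    exists f, [/\ Df m.+1 T = [set f], f \in T, isfan f & lvl f = m.+1].
  case Ec: (cfan m.+1 T) Hc => [|[|//]] _; [left; exact: cards0_eq | right; exact: Df1].
1: rewrite /cfan Df0 cards0 set0U.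
2: rewrite /cfan Dff cards1.
2: have f1 : (ends f).1 = ord0 by apply: ord_inj; rewrite ends1 ff.
2: have f2 : nat_of_ord (ends f).2 = m.+1 by rewrite ends2 fl.
2: have fTl : f \notin Tl T m by exact: notin_Tl.
all: case Hb: (bpath m.+1 T).
all: try (have [p [Dpp pT pf pl]] := Dp1 Hb; rewrite Dpp).
all: try (rewrite (Dp0 (negbT Hb)) ?set0U).
all: try have p1 : nat_of_ord (ends p).1 = m by rewrite ends1 (negbTE pf) pl.
all: try have p2 : nat_of_ord (ends p).2 = m.+1 by rewrite ends2 pl.
all: try have pTl : p \notin Tl T m by exact: notin_Tl.
all: case: (st m T) => [|[|s]] //= IH.
- case: IH => acT [l [hl c0 cI cl]].
  have [acS toP clS] := S0_facts pTl p1 p2 acT hl cI cl.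
  split => //; exists l; split => //.
  + by case/andP: hl => l0 lm; rewrite l0 /=; lia.
  + by move=> x xl; apply: conn_mono (subsetUr _ _) (c0 x xl).
  + move=> x y hx hy; apply: connect_trans (toP x hx) _; rewrite conn_sym; exact: toP.
- case: IH => acT conT; split.
    by apply: acyc_addp => //; rewrite p1; apply/eqP; lia.
  move=> x xm; case: (leqP x m) => hx.
    exact: conn_mono (subsetUr _ _) (conT x hx).
  have -> : x = (ends p).2 by apply: ord_inj; rewrite p2; lia.
  apply: (@connect_trans _ _ (ends p).1); last exact: edge_conn (setU11 p _).
  apply: conn_mono (subsetUr _ _) _; apply: conT; by rewrite p1.
- case: IH => acT [l [hl c0 cI cl]]; exact: L_nob mn (negbT Hb) hl cl.
- case: IH => acT conT; split => //; exists m.+1; split => //.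
  + by rewrite ltn0Sn leqnn.
  + move=> x y hx hy; have -> : x = y by apply: ord_inj; lia.
    exact: connect0.
  + move=> e /Tl_lt [h1 h2].
    have -> : (m < nat_of_ord (ends e).1) = false by lia.
    have -> : (m < nat_of_ord (ends e).2) = false by lia.
    done.
- case: IH => acT [l [hl c0 cI cl]].
  have [acS toP clS] := S0_facts pTl p1 p2 acT hl cI cl.
  have l0 : 0 < l by case/andP: hl.
  split.
    apply: acyc_add => //.
      rewrite in_setU1 negb_or fTl andbT; apply/eqP => fp; by rewrite fp (negbTE pf) in ff.
    apply/negP => C; have := @conn_closed _ _ ends _ (fun z : V => l <= z <= m.+1) _ _ clS C.
    rewrite /= f1 f2 /= leqNgt l0 /= leqnn andbT => H.
    have : l <= m.+1 by case/andP: hl => _ ?; lia.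
    by rewrite -H.
  move=> x xm; case: (ltnP x l) => xl.
    apply: conn_mono (subsetUr _ _) _; exact: conn_mono (subsetUr _ _) (c0 x xl).
  have e2 : (ends f).2 = (ends p).2 by apply: ord_inj; rewrite f2 p2.
  apply: (@connect_trans _ _ (ends f).2).
    rewrite -f1; exact: edge_conn (setU11 f _).
  rewrite e2 conn_sym; apply: conn_mono (subsetUr _ _) (toP x _); by rewrite xl xm.
- case: IH => acT conT.
  have S_sub : f |: (p |: Tl T m) \subset T.
    apply/subsetP => e; rewrite !inE => /orP[/eqP->//|/orP[/eqP->//|/andP[]//]].
  have cyc : ~~ acyc (f |: (p |: Tl T m)).
    apply: cyc_add.
      rewrite in_setU1 negb_or fTl andbT; apply/eqP => fp; by rewrite fp (negbTE pf) in ff.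
    have e2 : (ends f).2 = (ends p).2 by apply: ord_inj; rewrite f2 p2.
    rewrite f1 e2; apply: (@connect_trans _ _ (ends p).1); last exact: edge_conn (setU11 p _).
    apply: conn_mono (subsetUr _ _) _; apply: conT; by rewrite p1.
  apply/negP => /andP[_ ac]; by have := acyc_mono S_sub cyc; rewrite ac.
- case: IH => acT [l [hl c0 cI cl]]; exact: L_nob mn (negbT Hb) hl cl.
- case: IH => acT conT; split.
    by apply: acyc_addp => //; rewrite f1.
  move=> x xm; case: (leqP x m) => hx.
    exact: conn_mono (subsetUr _ _) (conT x hx).
  have -> : x = (ends f).2 by apply: ord_inj; rewrite f2; lia.
  rewrite -f1; exact: edge_conn (setU11 f _).
Qed.

Lemma inv_all T m : m <= n -> Inv T m.
Proof. elim: m => [|m IH] hm; [exact: inv0 | apply: invS => //; apply: IH; exact: ltnW]. Qed.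

Lemma Tl_n T : Tl T n = T.
Proof. by apply/setP => e; rewrite inE lvl_le andbT. Qed.

Lemma spanningE T : spanning T = (st n T == 1).
Proof.
have := inv_all T (leqnn n); rewrite /Inv Tl_n; case: (st n T) => [|[|s]] /=.
- case=> _ [l [/andP[l0 ln] _ _ cl]].
  apply/negbTE/negP => /andP[/forallP/(_ ord0)/forallP/(_ (inord l)) C _].
  have := @conn_closed _ _ ends T (fun z : V => l <= z <= n) _ _ cl C.
  by rewrite /= inordK ?ltnS // leqNgt l0 ln leqnn.
- case=> ac con; apply/andP; split => //; apply/forallP => x; apply/forallP => y.
  apply: connect_trans (con y _); last by rewrite -ltnS.
  by rewrite conn_sym; apply: con; rewrite -ltnS.
- by move/negbTE.
Qed.

Definition Pref m := [set e : E | lvl e <= m].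
Definition Fm m := [set e : E | isfan e && (lvl e == m)].
Definition Pm m := [set e : E | ~~ isfan e && (lvl e == m)].
Definition N m s := \sum_(X : {set E} | X \subset Pref m) (st m X == s : nat).

Lemma st_loc m T T' : (forall e, lvl e <= m -> (e \in T) = (e \in T')) -> st m T = st m T'.
Proof.
elim: m => //= m IH H; rewrite IH; last by move=> e le; apply: H; exact: leqW.
have eDp : Dp m.+1 T = Dp m.+1 T'.
  apply/setP => e; rewrite !inE; case: (eqVneq (lvl e) m.+1) => el; rewrite ?andbF //.
  by rewrite H ?el.
have eDf : Df m.+1 T = Df m.+1 T'.
  apply/setP => e; rewrite !inE; case: (eqVneq (lvl e) m.+1) => el; rewrite ?andbF //.
  by rewrite H ?el.
by rewrite /bpath /cfan eDp eDf.
Qed.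

Lemma PrefS m : Pref m.+1 = Pref m :|: (Fm m.+1 :|: Pm m.+1).
Proof.
apply/setP => e; rewrite !inE leq_eqVlt ltnS.
by case: (isfan e); case: (lvl e == m.+1); case: (lvl e <= m).
Qed.

Lemma disj1 m : [disjoint Pref m & Fm m.+1 :|: Pm m.+1].
Proof.
rewrite -setI_eq0; apply/eqP/setP => e; rewrite !inE.
case: (eqVneq (lvl e) m.+1) => [->|_]; first by rewrite ltnn.
by rewrite !andbF.
Qed.

Lemma disj2 m : [disjoint Fm m & Pm m].
Proof. rewrite -setI_eq0; apply/eqP/setP => e; rewrite !inE; case: (isfan e) => /=; by rewrite ?andbF. Qed.

Lemma stS_split m X : st m.+1 X = step (st m (X :&: Pref m))
   ((X :&: (Fm m.+1 :|: Pm m.+1)) :&: Pm m.+1 != set0)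
   #|(X :&: (Fm m.+1 :|: Pm m.+1)) :&: Fm m.+1|.
Proof.
rewrite [st m.+1 X]/= (@st_loc m X (X :&: Pref m)); last by move=> e le; rewrite !inE le andbT.
rewrite /bpath /cfan.
have -> : Dp m.+1 X = (X :&: (Fm m.+1 :|: Pm m.+1)) :&: Pm m.+1.
  apply/setP => e; rewrite !inE; by case: (isfan e); case: (lvl e == m.+1); case: (e \in X).
have -> : Df m.+1 X = (X :&: (Fm m.+1 :|: Pm m.+1)) :&: Fm m.+1.
  apply/setP => e; rewrite !inE; by case: (isfan e); case: (lvl e == m.+1); case: (e \in X).
by [].
Qed.

Lemma N_rec m s : N m.+1 s = \sum_(X : {set E} | X \subset Pref m)
   \sum_(Y1 : {set E} | Y1 \subset Fm m.+1) \sum_(Y2 : {set E} | Y2 \subset Pm m.+1)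
     (step (st m X) (Y2 != set0) #|Y1| == s : nat).
Proof.
rewrite /N PrefS.
rewrite (eq_bigr (fun X => (fun X Y => (step (st m X) (Y :&: Pm m.+1 != set0) #|Y :&: Fm m.+1| == s : nat))
   (X :&: Pref m) (X :&: (Fm m.+1 :|: Pm m.+1)))); last by move=> X _; rewrite stS_split.
rewrite (@sum_subsetU _ _ _ (fun X Y => (step (st m X) (Y :&: Pm m.+1 != set0) #|Y :&: Fm m.+1| == s : nat)) (disj1 _)).
apply: eq_bigr => X _.
exact: (@sum_subsetU _ _ _ (fun Y1 Y2 => (step (st m X) (Y2 != set0) #|Y1| == s : nat)) (disj2 _)).
Qed.

Lemma Pm1 : Pm 1 = set0.
Proof. apply/setP => e; rewrite !inE; case: e => //= j. Qed.

Lemma PmS m : 0 < m < n -> exists p, Pm m.+1 = [set p].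
Proof.
move=> hm; have H : m.-1 < n.-1 by lia.
exists (inl (Ordinal H)); apply/setP; case => [j|[j k]]; rewrite !inE //=.
apply/eqP/eqP => [hj|[->]] /=; last by lia.
congr inl; apply: val_inj => /=; lia.
Qed.

Lemma cardFm m : m < n -> #|Fm m.+1| = a.
Proof.
move=> mn; have -> : Fm m.+1 = [set (inr (Ordinal mn, k) : E) | k : 'I_a].
  apply/setP; case => [j|[j k]]; rewrite !inE /=.
    by apply/esym/imsetP => -[].
  apply/eqP/imsetP => [[hj]|[k' _ [-> _]] //].
  exists k => //; congr (inr (_, _)); exact: val_inj.
by rewrite card_imset ?card_ord // => k1 k2 [].
Qed.

Definition Gv (z : bool) (s' s : nat) : nat :=
  ((step s' false 0 == s) + z * (step s' true 0 == s)) +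
  ((step s' false 1 == s) + z * (step s' true 1 == s)) * a.

Lemma N_rec2 m s : m < n -> s <= 1 ->
  N m.+1 s = \sum_(X : {set E} | X \subset Pref m) Gv (0 < m) (st m X) s.
Proof.
move=> mn s1; rewrite N_rec; apply: eq_bigr => X _.
have H : forall k, \sum_(Y2 : {set E} | Y2 \subset Pm m.+1) (step (st m X) (Y2 != set0) k == s : nat)
   = (step (st m X) false k == s) + (0 < m) * (step (st m X) true k == s).
  move=> k; case: m mn => [|m] mn.
    by rewrite Pm1 sum_sub0 eqxx /= addn0.
  have [p ->] := @PmS m.+1 mn.
  by rewrite sum_sub1 eqxx (negbTE (set1_n0 p)) mul1n.
rewrite (eq_bigr (fun Y1 : {set E} => (fun k => (step (st m X) false k == s) + (0 < m) * (step (st m X) true k == s)) #|Y1|)); last by move=> Y1 _; exact: H.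
rewrite (@sum_card01 _ (Fm m.+1) (fun k => (step (st m X) false k == s) + (0 < m) * (step (st m X) true k == s))) ?cardFm //.
move=> k k1; rewrite !step_big //; clear H.
by case: s s1 => [|[|t]] //= _; rewrite muln0.
Qed.

Lemma N_split z m s : s <= 1 ->
  \sum_(X : {set E} | X \subset Pref m) Gv z (st m X) s = Gv z 0 s * N m 0 + Gv z 1 s * N m 1.
Proof.
move=> s1; rewrite /N !big_distrr -big_split /=; apply: eq_bigr => X _.
case: (st m X) => [|[|t]] /=; rewrite ?muln0 ?muln1 ?addn0 ?add0n //.
rewrite /Gv /step /=; case: s s1 => [|[|u]] //= _; rewrite !muln0 //.
Qed.

Lemma N_recx m : m < n -> N m.+1 1 = (0 < m) * a * N m 0 + ((0 < m) + a) * N m 1.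
Proof.
move=> mn; rewrite N_rec2 // N_split //; rewrite /Gv /step /=.
case: (0 < m) => /=; lia.
Qed.

Lemma N_recy m : m < n -> N m.+1 0 = (0 < m) * N m 0 + N m 1.
Proof.
move=> mn; rewrite N_rec2 // N_split //; rewrite /Gv /step /=.
case: (0 < m) => /=; lia.
Qed.

Lemma N0 s : N 0 s = (1 == s).
Proof.
rewrite /N (_ : Pref 0 = set0) ?sum_sub0 //.
by apply/setP => e; rewrite !inE leqn0 (gtn_eqF (lvl_gt0 e)).
Qed.

Lemma t_modfanE : t_modfan a n = N n 1.
Proof.
rewrite /t_modfan /num_spanning_trees /N -sum1_card big_mkcond [RHS]big_mkcond /=.
apply: eq_bigr => X _; rewrite !inE.
have -> : X \subset Pref n by apply/subsetP => e _; rewrite inE lvl_le.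
by have := spanningE X; rewrite /spanning => ->; case: (st n X == 1).
Qed.

End Fan.

From mathcomp Require Import ring.
Import GRing.Theory Num.Theory.

Lemma MVS k (x : int) : MV k.+1 x = ((x + 2) * MV k x - (if k is k'.+1 then MV k' x else 0))%R.
Proof. by case: k => [|k] /=; rewrite ?mulr1 ?subr0. Qed.

Lemma alg a n (x y : nat -> nat) : x 0 = 1 -> y 0 = 0 ->
  (forall m, m < n -> x m.+1 = (0 < m) * a * y m + ((0 < m) + a) * x m /\
                      y m.+1 = (0 < m) * y m + x m) ->
  forall k, k < n -> ((x k.+1)%:Z = a%:Z * MV k a%:Z /\
     (y k.+1)%:Z = MV k a%:Z - (if k is k'.+1 then MV k' a%:Z else 0))%R.
Proof.
move=> x0 y0 rec; elim => [|k IH] hk.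
  have [-> ->] := rec 0 hk; rewrite x0 y0 /=; split; lia.
have [hx hy] := IH (ltnW hk); have [-> ->] := rec k.+1 hk.
rewrite ltn0Sn !mul1n !PoszD !PoszM hx hy MVS; split; ring.
Qed.

Lemma fib4 j : fib j.+4 + fib j = 3 * fib j.+2.
Proof.
have h2 : fib j.+2 = fib j.+1 + fib j by [].
have h3 : fib j.+3 = fib j.+2 + fib j.+1 by [].
have h4 : fib j.+4 = fib j.+3 + fib j.+2 by [].
lia.
Qed.

Lemma MV1 k : (MV k 1%:Z = (fib (2 * k).+2)%:Z)%R.
Proof.
suff : (MV k 1%:Z = (fib (2 * k).+2)%:Z /\ MV k.+1 1%:Z = (fib (2 * k).+4)%:Z)%R by case.
elim: k => [|k [h1 h2]]; first by split.
have E1 : (2 * k.+1).+2 = (2 * k).+4 by lia.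
have E2 : (2 * k.+1).+4 = ((2 * k).+2).+4 by lia.
rewrite E1; split => //.
have -> : MV k.+2 1%:Z = ((1%:Z + 2) * MV k.+1 1%:Z - MV k 1%:Z)%R by [].
rewrite h1 h2; have := fib4 (2 * k).+2; lia.
Qed.

Theorem theorem5p9 (a n : nat) :
  1 <= a -> 2 <= n ->
  ((t_modfan a n)%:Z = a%:Z * MV n.-1 a%:Z)%R /\
  (a = 1 -> t_modfan 1 n = fib (2 * n)).
Proof.
move=> ha hn.
have main : forall b, ((t_modfan b n)%:Z = b%:Z * MV n.-1 b%:Z)%R.
  move=> b; rewrite t_modfanE.
  have := @alg b n (fun m => N b n m 1) (fun m => N b n m 0).
  rewrite !N0 /= => /(_ erefl erefl) H.
  have [hx _] := H (fun m mn => conj (@N_recx b n m mn) (@N_recy b n m mn)) n.-1 ltac:(lia).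
  by rewrite prednK in hx; last lia.
split; first exact: main.
move=> a1; subst a; have := main 1; rewrite MV1.
have -> : (2 * n.-1).+2 = 2 * n by lia.
lia.
Qed.
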